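(* Let $(\mathcal{S},d_{\mathcal{S}})$ be a metric state space, $\mathcal{A}$ a finite action set, $\gamma\in[0,1)$, $R:\mathcal{S}\times\mathcal{A}\to\mathbb{R}$ a reward with finite $K^{\mathcal{A}}_{d_{\mathcal{S}},\mathbb{R}}(R)$, and $T$ a transition kernel with $\gamma K^{\mathcal{A}}_{d_{\mathcal{S}},W}(T)<1$. Let $f:\mathbb{R}^{|\mathcal{A}|}\to\mathbb{R}$ be one of the backup operators $\max$, $\mathrm{mean}$, $\epsilon$-greedy, or mellowmax $mm_\beta(x)=\frac{1}{\beta}\log\big(\frac{1}{|\mathcal{A}|}\sum_i e^{\beta x_i}\big)$. Consider Generalized Value Iteration (GVI): starting from $\widehat Q_0$ with finite $K^{\mathcal{A}}_{d_{\mathcal{S}},\mathbb{R}}(\widehat Q_0)$, iterate $\widehat Q_{n+1}(s,a)=R(s,a)+\gamma\int T(s'\mid s,a)\,f\big(\widehat Q_n(s',\cdot)\big)\,ds'$. Then the value function computed by GVI has Lipschitz constant bounded by $\frac{K^{\mathcal{A}}_{d_{\mathcal{S}},\mathbb{R}}(R)}{1-\gamma K^{\mathcal{A}}_{d_{\mathcal{S}},W}(T)}$; precisely, $\lim_{n\to\infty}K^{\mathcal{A}}_{d_{\mathcal{S}},\mathbb{R}}(\widehat Q_{n})\le\frac{K^{\mathcal{A}}_{d_{\mathcal{S}},\mathbb{R}}(R)}{1-\gamma K^{\mathcal{A}}_{d_{\mathcal{S}},W}(T)}$ (in the sense of $\limsup$).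
   Context: For $h:\mathcal{S}\times\mathcal{A}\to\mathbb{R}$, $K^{\mathcal{A}}_{d_{\mathcal{S}},\mathbb{R}}(h):=\sup_{a\in\mathcal{A}}\sup_{s_1\ne s_2}\frac{|h(s_1,a)-h(s_2,a)|}{d_{\mathcal{S}}(s_1,s_2)}$. $W$ is the first Wasserstein metric on distributions over $(\mathcal{S},d_{\mathcal{S}})$, and $K^{\mathcal{A}}_{d_{\mathcal{S}},W}(T):=\sup_{a}\sup_{s_1\ne s_2}\frac{W(T(\cdot\mid s_1,a),T(\cdot\mid s_2,a))}{d_{\mathcal{S}}(s_1,s_2)}$. The $\epsilon$-greedy operator is $x\mapsto(1-\epsilon)\max_i x_i+\epsilon\,\mathrm{mean}(x)$. The listed operators are Lipschitz with constant $1$ from $(\mathbb{R}^{|\mathcal{A}|},\|\cdot\|_\infty)$ to $\mathbb{R}$. *)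

(* Defs.v *)
From HB Require Import structures.
From mathcomp Require Import all_boot all_order all_algebra.
From mathcomp Require Import all_classical all_reals all_analysis.
Set Implicit Arguments. Unset Strict Implicit. Unset Printing Implicit Defensive.
Import Order.TTheory GRing.Theory Num.Theory.
Local Open Scope classical_set_scope.
Local Open Scope ring_scope.

Definition is_metric {R : realType} {S : Type} (dS : S -> S -> R) : Prop :=
  [/\ forall x y, 0 <= dS x y,
      forall x y, dS x y = 0 <-> x = y,
      forall x y, dS x y = dS y x &
      forall x y z, dS x z <= dS x y + dS y z].

Definition lipschitz_with {R : realType} {S : Type} (dS : S -> S -> R) (c : R)
  (g : S -> R) : Prop := forall x y, `|g x - g y| <= c * dS x y.

Definition Klip {R : realType} {S A : Type} (dS : S -> S -> R)
  (h : S -> A -> R) : \bar R :=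
  ereal_sup [set r | exists a s1 s2, s1 <> s2 /\
                     r = (`|h s1 a - h s2 a| / dS s1 s2)%:E].

(* First Wasserstein metric, in Kantorovich-Rubinstein (dual) form:
   sup over 1-Lipschitz g of |int g dmu - int g dnu| *)
Definition wasserstein {R : realType} {d : measure_display} {S : measurableType d}
  (dS : S -> S -> R) (mu nu : probability S R) : \bar R :=
  ereal_sup [set r | exists g : S -> R, lipschitz_with dS 1 g /\
     r = (`|Rintegral mu setT g - Rintegral nu setT g|)%:E].

Definition Kwass {R : realType} {d : measure_display} {S : measurableType d} {A : Type}
  (dS : S -> S -> R) (T : S -> A -> probability S R) : \bar R :=
  ereal_sup [set r | exists a s1 s2, s1 <> s2 /\
                     r = (wasserstein dS (T s1 a) (T s2 a) * ((dS s1 s2)^-1)%:E)%E].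

(* Backup operators on R^{|A|}, with A = 'I_n.+1 (finite, nonempty) *)
Inductive backup (R : realType) :=
  | BMax | BMean | BEpsGreedy of R | BMellowmax of R .
Arguments BMax {R}. Arguments BMean {R}.

Definition backup_ok {R : realType} (b : backup R) : Prop :=
  match b with
  | BEpsGreedy e => 0 <= e <= 1
  | BMellowmax beta => 0 < beta
  | _ => True
  end.

Definition opmax {R : realType} {n : nat} (x : 'I_n.+1 -> R) : R :=
  \big[Num.max/x ord0]_(i < n.+1) x i.
Definition opmean {R : realType} {n : nat} (x : 'I_n.+1 -> R) : R :=
  (\sum_(i < n.+1) x i) / n.+1%:R.

Definition apply_backup {R : realType} {n : nat} (b : backup R) (x : 'I_n.+1 -> R) : R :=
  match b with
  | BMax => opmax x
  | BMean => opmean x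
  | BEpsGreedy e => (1 - e) * opmax x + e * opmean x
  | BMellowmax beta => ln ((\sum_(i < n.+1) expR (beta * x i)) / n.+1%:R) / beta
  end.

(* Main.v *)
Require Import Defs.
From HB Require Import structures.
From mathcomp Require Import all_boot all_order all_algebra.
From mathcomp Require Import all_classical all_reals all_analysis.
From mathcomp Require Import ring lra.
Import Order.TTheory GRing.Theory Num.Theory.
Local Open Scope classical_set_scope.
Local Open Scope ring_scope.

Lemma bigmax_le_seq {R : realType} {I : Type} (r : seq I) (z M : R) (F : I -> R) :
  z <= M -> (forall i, F i <= M) -> \big[Num.max/z]_(i <- r) F i <= M.
Proof.
move=> zM FM; elim: r => [|a r IH]; first by rewrite big_nil.
by rewrite big_cons ge_max FM IH.
Qed.

Lemma le_bigmax_seq {R : realType} {I : eqType} (r : seq I) (z : R) (F : I -> R) i :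
  i \in r -> F i <= \big[Num.max/z]_(j <- r) F j.
Proof.
elim: r => [|a r IH] //; rewrite inE big_cons le_max => /orP[/eqP->|/IH->].
  by rewrite lexx.
by rewrite orbT.
Qed.

Lemma opmax_shift {R : realType} {n : nat} (x y : 'I_n.+1 -> R) c :
  (forall i, x i <= y i + c) -> opmax x <= opmax y + c.
Proof.
move=> H; rewrite /opmax; apply: bigmax_le_seq => [|i].
  apply: le_trans (H ord0) _; rewrite lerD2r.
  by apply: le_bigmax_seq; rewrite mem_index_enum.
apply: le_trans (H i) _; rewrite lerD2r.
by apply: le_bigmax_seq; rewrite mem_index_enum.
Qed.

Lemma opmean_shift {R : realType} {n : nat} (x y : 'I_n.+1 -> R) c :
  (forall i, x i <= y i + c) -> opmean x <= opmean y + c.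
Proof.
move=> H; rewrite /opmean.
have -> : c = (\sum_(i < n.+1) c) / n.+1%:R.
  by rewrite sumr_const card_ord -[c *+ _]mulr_natr mulfK // pnatr_eq0.
rewrite -mulrDl ler_wpM2r // ?invr_ge0 // -big_split /=.
by apply: ler_sum => i _; exact: H.
Qed.

Lemma mm_shift {R : realType} {n : nat} (beta : R) (x y : 'I_n.+1 -> R) c :
  0 < beta -> (forall i, x i <= y i + c) ->
  ln ((\sum_(i < n.+1) expR (beta * x i)) / n.+1%:R) / beta <=
  ln ((\sum_(i < n.+1) expR (beta * y i)) / n.+1%:R) / beta + c.
Proof.
move=> b0 H.
have sp : forall z : 'I_n.+1 -> R, 0 < (\sum_(i < n.+1) expR (beta * z i)).
  move=> z; rewrite big_ord_recl; apply: ltr_pwDl; first exact: expR_gt0.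
  by apply: sumr_ge0 => i _; apply: ltW; exact: expR_gt0.
have pos : forall z : 'I_n.+1 -> R, 0 < (\sum_(i < n.+1) expR (beta * z i)) / n.+1%:R.
  by move=> z; apply: divr_gt0; rewrite ?ltr0n.
have -> : c = ln (expR (beta * c)) / beta by rewrite expRK mulrC mulKf // gt_eqF.
rewrite -mulrDl ler_pM2r ?invr_gt0 // -lnM ?posrE ?expR_gt0 ?pos //.
rewrite ler_ln ?posrE ?expR_gt0 ?pos ?mulr_gt0 ?expR_gt0 ?pos //.
rewrite mulrAC ler_pM2r ?invr_gt0 ?ltr0n ?sp // big_distrl /=.
apply: ler_sum => i _; rewrite -expRD ler_expR -mulrDr ler_pM2l //.
Qed.

Lemma backup_shift {R : realType} {n : nat} (b : backup R) (x y : 'I_n.+1 -> R) c :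
  backup_ok b -> (forall i, x i <= y i + c) ->
  apply_backup b x <= apply_backup b y + c.
Proof.
case: b => [| |e|beta] /= ok H.
- exact: opmax_shift.
- exact: opmean_shift.
- case/andP: ok => e0 e1.
  have -> : c = (1 - e) * c + e * c by rewrite -mulrDl subrK mul1r.
  rewrite addrACA; apply: lerD.
    by rewrite -mulrDr ler_wpM2l ?subr_ge0 // opmax_shift.
  by rewrite -mulrDr ler_wpM2l // opmean_shift.
- exact: mm_shift.
Qed.

Lemma backup_lip {R : realType} {n : nat} (b : backup R) (x y : 'I_n.+1 -> R) c :
  backup_ok b -> (forall i, `|x i - y i| <= c) ->
  `|apply_backup b x - apply_backup b y| <= c.
Proof.
move=> ok H.
have h1 : apply_backup b x <= apply_backup b y + c.
  apply: backup_shift => // i; have := H i; rewrite ler_norml => /andP[_ h]; lra.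
have h2 : apply_backup b y <= apply_backup b x + c.
  apply: backup_shift => // i; have := H i; rewrite ler_norml => /andP[h _]; lra.
rewrite ler_norml; apply/andP; split; lra.
Qed.


Section K.
Context {R : realType} {S A : Type} (dS : S -> S -> R).
Hypothesis met : is_metric dS.

Lemma d_ge0 x y : 0 <= dS x y.
Proof. by case: met. Qed.

Lemma d_gt0 x y : x <> y -> 0 < dS x y.
Proof.
move=> xy; case: met => h0 h1 _ _; rewrite lt_neqAle h0 andbT.
by apply/eqP => /esym /h1.
Qed.

Lemma d_sym x y : dS x y = dS y x.
Proof. by case: met. Qed.

Lemma d_xx x : dS x x = 0.
Proof. by case: met => _ h _ _; apply/h. Qed.

Lemma Klip_ub (h : S -> A -> R) s1 s2 a : s1 <> s2 ->
  ((`|h s1 a - h s2 a| / dS s1 s2)%:E <= Klip dS h)%E.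
Proof. by move=> ne; apply: ereal_sup_ubound; exists a, s1, s2. Qed.

Lemma Klip_pt (h : S -> A -> R) L : Klip dS h = L%:E ->
  forall s1 s2 a, `|h s1 a - h s2 a| <= L * dS s1 s2.
Proof.
move=> hL s1 s2 a; have [->|ne] := pselect (s1 = s2).
  by rewrite subrr normr0 d_xx mulr0.
have := Klip_ub h s1 s2 a ne; rewrite hL lee_fin ler_pdivrMr //; exact: d_gt0.
Qed.

Lemma Klip_le (h : S -> A -> R) L :
  (forall s1 s2 a, `|h s1 a - h s2 a| <= L * dS s1 s2) -> (Klip dS h <= L%:E)%E.
Proof.
move=> H; apply: ge_ereal_sup => _ [a [s1 [s2 [ne ->]]]].
by rewrite lee_fin ler_pdivrMr ?H //; exact: d_gt0.
Qed.

Lemma Klip_ge0 (h : S -> A -> R) (s1 s2 : S) (a : A) : s1 <> s2 -> (0 <= Klip dS h)%E.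
Proof.
move=> ne; apply: le_trans (Klip_ub h s1 s2 a ne); rewrite lee_fin divr_ge0 //.
exact: d_ge0.
Qed.

Lemma Klip_empty (h : S -> A -> R) : (forall s1 s2 : S, s1 = s2) -> Klip dS h = (-oo)%E.
Proof.
move=> H; rewrite /Klip.
have -> : ( [set r | exists a s1 s2, s1 <> s2 /\
   r = (`|h s1 a - h s2 a| / dS s1 s2)%:E] : set (\bar R)) = set0.
  by apply/seteqP; split => // r [a [s1 [s2 [ne _]]]]; exfalso; apply: ne; apply: H.
exact: ereal_sup0.
Qed.

End K.


Section W.
Context {R : realType} {d : measure_display} {S : measurableType d} (dS : S -> S -> R).
Hypothesis met : is_metric dS.

Let d_ge0 x y : 0 <= dS x y.
Proof. by case: met. Qed.
Let d_sym x y : dS x y = dS y x.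
Proof. by case: met. Qed.

Lemma lip_integrable (P : probability S R) (g : S -> R) c s0 : 0 <= c ->
  lipschitz_with dS c g -> measurable_fun setT g ->
  P.-integrable setT (fun s => (dS s0 s)%:E) -> P.-integrable setT (EFin \o g).
Proof.
move=> c0 Lg mg Id.
apply: (le_integrable _ _ (g := fun s => ((`|g s0|)%:E + c%:E * (dS s0 s)%:E)%E)) => //.
- exact/measurable_realfun.measurable_EFinP.
  move=> x _ /=; rewrite lee_fin.
  rewrite [X in _ <= X]ger0_norm ?addr_ge0 ?mulr_ge0 //.
  have := Lg x s0; rewrite d_sym => h.
  have -> : g x = g s0 + (g x - g s0) by rewrite addrC subrK.
  by apply: le_trans (ler_normD _ _) _; rewrite lerD2l.
- apply: (integrableD _ (finite_measure_integrable_cst _ _ _) (integrableZl _ _ Id)) => //.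
Qed.

Lemma W_ge0 (P Q : probability S R) : (0 <= wasserstein dS P Q)%E.
Proof.
apply: (@le_trans _ _ (`|Rintegral P setT (fun _ => 0) - Rintegral Q setT (fun _ => 0)|)%:E).
  by rewrite lee_fin normr_ge0.
apply: ereal_sup_ubound; exists (fun _ => 0); split => // x y.
by rewrite subrr normr0 mul1r.
Qed.

Lemma W_lip (P Q : probability S R) (g : S -> R) c : 0 <= c ->
  lipschitz_with dS c g ->
  P.-integrable setT (EFin \o g) -> Q.-integrable setT (EFin \o g) ->
  ((`|Rintegral P setT g - Rintegral Q setT g|)%:E <= c%:E * wasserstein dS P Q)%E.
Proof.
move=> c0 Lg IP IQ.
have [c00|cpos] := eqVneq c 0.
  have gc : g = cst (g point).
    apply/funext => x; have := Lg x point; rewrite c00 mul0r normr_le0 subr_eq0.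
    by move/eqP.
  rewrite gc !Rintegral_cst //.
  have h1 : forall PP : probability S R, fine (PP [set: S]) = 1 by move=> PP; rewrite probability_setT.
  rewrite !h1.
  by rewrite subrr normr0 c00 mul0e.
have cp : 0 < c by rewrite lt_neqAle eq_sym cpos c0.
have ub : ((`|Rintegral P setT (fun x => c^-1 * g x) - Rintegral Q setT (fun x => c^-1 * g x)|)%:E
   <= wasserstein dS P Q)%E.
  apply: ereal_sup_ubound; exists (fun x => c^-1 * g x); split => // x y.
  rewrite -mulrBr normrM ger0_norm ?invr_ge0 // mul1r ler_pdivrMl //.
rewrite !RintegralZl // -mulrBr normrM ger0_norm ?invr_ge0 // in ub.
apply: le_trans (lee_wpmul2l _ ub); last by rewrite lee_fin.
by rewrite -EFinM mulrA mulfV // mul1r.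
Qed.

End W.

Lemma W_same {R : realType} {d : measure_display} {S : measurableType d}
  (dS : S -> S -> R) (P : probability S R) : (wasserstein dS P P <= 0)%E.
Proof. by apply: ge_ereal_sup => _ [g [_ ->]]; rewrite subrr normr0. Qed.


Lemma limsup_geom {R : realType} (u : nat -> \bar R) (B M k : R) : 0 <= k < 1 ->
  (forall n, (u n <= (B + k ^+ n * M)%:E)%E) -> (limn_esup u <= B%:E)%E.
Proof.
move=> /andP[k0 k1] H.
pose v := fun n : nat => ((B + k ^+ n * M)%:E : \bar R).
have vB : v n @[n --> \oo] --> B%:E.
  apply: cvg_EFin; first by apply: nearW.
  rewrite -[X in _ --> X]addr0; apply: cvgD; first exact: cvg_cst.
  rewrite -(mul0r M); apply: cvgMr_tmp; apply: cvg_expr.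
  by rewrite ger0_norm.
have [_ <-] := cvg_limn_einf_sup vB.
rewrite !limn_esup_lim; apply: lee_lim; [exact: is_cvg_esups|exact: is_cvg_esups|].
apply: nearW => n; apply: ge_ereal_sup => _ [m /= nm <-].
apply: le_trans (H m) _; apply: ereal_sup_ubound; by exists m.
Qed.


Theorem theorem3 (R : realType) (d : measure_display) (S : measurableType d)
  (n : nat) (dS : S -> S -> R) (gamma : R) (Rw : S -> 'I_n.+1 -> R)
  (T : S -> 'I_n.+1 -> probability S R) (b : backup R)
  (Q : nat -> S -> 'I_n.+1 -> R) :
  is_metric dS ->
  (forall (g : S -> R) (c : R), lipschitz_with dS c g -> measurable_fun setT g) ->
  (forall s a s0, (T s a).-integrable setT (fun s' => (dS s0 s')%:E)) ->
  0 <= gamma < 1 ->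
  (Klip dS Rw < +oo)%E ->
  (gamma%:E * Kwass dS T < 1)%E ->
  backup_ok b ->
  (Klip dS (Q 0%N) < +oo)%E ->
  (forall k s a, Q k.+1 s a =
     Rw s a + gamma * Rintegral (T s a) setT (fun s' => apply_backup b (Q k s'))) ->
  (limn_esup (fun k => Klip dS (Q k)) <= Klip dS Rw / (1 - gamma%:E * Kwass dS T))%E.
Proof.
move=> met mes intd /andP[g0 g1] KRfin kfin ok KQ0 HQ.
have [[s1 [s2 ne]] | nex] := pselect (exists s1 s2 : S, s1 <> s2); last first.
  have alleq : forall x y : S, x = y.
    by move=> x y; apply: contrapT => xy; apply: nex; exists x, y.
  rewrite (_ : (fun k => Klip dS (Q k)) = fun _ => -oo%E); last first.
    by apply/funext => k; rewrite (Klip_empty dS _ alleq).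
  by have [_ ->] := cvg_limn_einf_sup (@cvg_cst _ (-oo%E : \bar R) _ \oo _); rewrite leNye.
have [KR hKR] : exists KR, Klip dS Rw = KR%:E.
  move: KRfin (Klip_ge0 dS met Rw s1 s2 ord0 ne); case: (Klip dS Rw) => [r| |] // _ _.
  by exists r.
have KR0 : 0 <= KR by rewrite -lee_fin -hKR (Klip_ge0 dS met Rw s1 s2 ord0 ne).
have [L0 hL0] : exists L0, Klip dS (Q 0%N) = L0%:E.
  move: KQ0 (Klip_ge0 dS met (Q 0%N) s1 s2 ord0 ne); case: (Klip dS (Q 0%N)) => [r| |] // _ _.
  by exists r.
have Kw0 : (0 <= Kwass dS T)%E.
  apply: le_trans (ereal_sup_ubound _); last by exists ord0, s1, s2.
  apply: mule_ge0; first exact: W_ge0.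
  by rewrite lee_fin invr_ge0 (d_ge0 dS met).
have [k [/andP[k0 k1] [hk kW]]] : exists k : R, 0 <= k < 1 /\
    (gamma%:E * Kwass dS T)%E = k%:E /\
    (forall x y a, gamma = 0 \/ exists w, wasserstein dS (T x a) (T y a) = w%:E /\
        0 <= w /\ gamma * w <= k * dS x y).
  have [->|gn0] := eqVneq gamma 0.
    by exists 0; rewrite lexx ltr01 mul0e; split => //; split => // *; left.
  have gp : 0 < gamma by rewrite lt_neqAle eq_sym gn0 g0.
  move: kfin Kw0; case E: (Kwass dS T) => [kw| |] //; last first.
    by rewrite gt0_muley ?lte_fin.
  rewrite -EFinM lte_fin lee_fin => gk1 kw0.
  exists (gamma * kw); rewrite gk1 mulr_ge0 //; split => //; split => // x y a.
  right.
  have [xy|nxy] := pselect (x = y).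
    subst y; exists 0; split; last first.
      by split => //; rewrite mulr0; apply: mulr_ge0; [apply: mulr_ge0|apply: (d_ge0 dS met)].
    by apply/eqP; rewrite eq_le W_same W_ge0.
  have ub : (wasserstein dS (T x a) (T y a) * ((dS x y)^-1)%:E <= kw%:E)%E.
    by rewrite -E; apply: ereal_sup_ubound; exists a, x, y.
  have dp := d_gt0 dS met x y nxy.
  move: ub (W_ge0 dS met (T x a) (T y a)).
  case: (wasserstein dS (T x a) (T y a)) => [w| |] //; last first.
    by rewrite gt0_mulye ?lte_fin ?invr_gt0.
  rewrite -EFinM !lee_fin ler_pdivrMr // => wk w0; exists w; split => //; split => //.
  by rewrite -mulrA ler_wpM2l // ltW.
have step : forall j L, 0 <= L ->
    (forall x y a, `|Q j x a - Q j y a| <= L * dS x y) ->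
    forall x y a, `|Q j.+1 x a - Q j.+1 y a| <= (KR + k * L) * dS x y.
  move=> j L Lp HL x y a.
  pose F := fun s' => apply_backup b (Q j s').
  have LF : lipschitz_with dS L F.
    move=> u v; apply: backup_lip => // i; exact: HL.
  have IF : forall s, (T s a).-integrable setT (EFin \o F).
    move=> s; exact: (lip_integrable dS met (T s a) F L s1 Lp LF (mes _ _ LF) (intd s a s1)).
  rewrite !HQ -/F.
  set I1 := Rintegral _ _ _; set I2 := Rintegral _ _ _.
  have hR := Klip_pt dS met Rw KR hKR x y a.
  have hI : gamma * `|I1 - I2| <= k * L * dS x y.
    case: (kW x y a) => [->|[w [hw [w0 gw]]]].
      by rewrite mul0r !mulr_ge0 ?(d_ge0 dS met).
    have := W_lip dS (T x a) (T y a) F L Lp LF (IF x) (IF y); rewrite hw -EFinM lee_fin => h.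
    apply: le_trans (ler_wpM2l g0 h) _.
    by rewrite mulrCA (mulrC k) -mulrA ler_wpM2l.
  have -> : Rw x a + gamma * I1 - (Rw y a + gamma * I2) =
            (Rw x a - Rw y a) + gamma * (I1 - I2) by ring.
  apply: le_trans (ler_normD _ _) _.
  rewrite normrM ger0_norm // mulrDl -mulrA.
  by rewrite mulrA; apply: lerD.
pose B := KR / (1 - k).
have k1' : 1 - k != 0 by rewrite subr_eq0 eq_sym lt_eqF.
have eB : KR + k * B = B by rewrite /B; field.
have B0 : 0 <= B by rewrite /B divr_ge0 // subr_ge0 ltW.
pose M := `|L0 - B|.
have bound : forall j x y a, `|Q j x a - Q j y a| <= (B + k ^+ j * M) * dS x y.
  elim => [|j IH] x y a.
    apply: le_trans (Klip_pt dS met (Q 0%N) L0 hL0 x y a) _; apply: ler_wpM2r; first exact: d_ge0.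
    rewrite expr0 mul1r /M; have := ler_norm (L0 - B); lra.
  apply: le_trans (step j _ _ IH x y a) _.
    by apply: addr_ge0 => //; apply: mulr_ge0; [exact: exprn_ge0|exact: normr_ge0].
  by rewrite mulrDr addrA eB mulrA -exprS.
have -> : (Klip dS Rw / (1 - gamma%:E * Kwass dS T))%E = B%:E.
  by rewrite hKR hk -EFinB inver (negbTE k1') -EFinM.
apply: (@limsup_geom _ _ B M k); first by rewrite k0.
move=> j; exact: (Klip_le dS met (Q j) _ (bound j)).
Qed.
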